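(* For each $n\in\mathbf{N}$ let $W_n = (w_{ij}^{(n)})_{i,j=1}^n$ be a random $n\times n$ Hermitian matrix whose upper triangular entries are jointly independent with mean zero, and assume: there are $\eta_n>0$ with $\eta_n\to0$ and $|w_{ij}^{(n)}|\le\eta_n$ for all $n,i,j$; there is a finite $C\ge0$ with $\sum_{j=1}^n \operatorname{Var}[w_{ij}^{(n)}]\le C$ for all $n$ and $i$; and \[ \lim_{n\to\infty} \frac{1}{n}\sum_{i=1}^n \biggl| \sum_{j=1}^n \Bigl( \operatorname{Var}\bigl[w_{ij}^{(n)}\bigr] - \frac{1}{n} \Bigr) \biggr| = 0. \] Then for any finite tree $T$, \[ \lim_{n\to\infty} \frac{1}{n} \sum_{F \in I(T,n)} P(T,F) = 1. \]
   Context: Graphs are undirected, may have loops, and have no multiple edges. For a finite graph $G$ and $n\in\mathbf{N}$, $I(G,n)$ is the set of injections $V(G)\to\{1,\ldots,n\}$. For $F\in I(G,n)$, $P(G,F) := \prod_{e\in E(G)} \operatorname{Var}\bigl[w^{(n)}_{F(u_e)F(v_e)}\bigr]$, where $u_e,v_e$ are the ends of $e$; the empty product is $1$. $\operatorname{Var}[w]=\mathbf{E}|w-\mathbf{E}w|^2$. *)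

(* Defs.v *)
From HB Require Import structures.
From mathcomp Require Import all_boot all_order all_algebra.
From mathcomp Require Import all_classical all_reals all_analysis.
Set Implicit Arguments. Unset Strict Implicit. Unset Printing Implicit Defensive.
Import Order.TTheory GRing.Theory Num.Theory.
Local Open Scope ring_scope.
Local Open Scope classical_set_scope.

(* A finite graph on vertex type V is given by a symmetric adjacency relation
   e (loops allowed: e v v).  Its edges are the unordered pairs {u,v} with e u v;
   we enumerate each edge exactly once as the ordered pair (u,v) with e u v and
   enum_rank u <= enum_rank v, whose first/second components are the two ends. *)
Definition is_edge (V : finType) (e : rel V) (p : V * V) : bool :=
  e p.1 p.2 && (enum_rank p.1 <= enum_rank p.2)%N.

Definition is_tree (V : finType) (e : rel V) : Prop :=
  [/\ (0 < #|V|)%N,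
      symmetric e,
      irreflexive e,
      (forall x y : V, connect e x y)
    & (forall c : seq V, (3 <= size c)%N -> ~ ucycle e c)].

(* I(G,n): injections V -> {1..n}; {1..n} is modelled by 'I_n = {0..n-1}. *)
Definition injections (V : finType) (n : nat) : pred {ffun V -> 'I_n} :=
  fun F => injectiveb F.

(* P(G,F) = prod over edges of sigma (F u_e) (F v_e), sigma = variance profile. *)
Definition Pweight (R : realType) (V : finType) (e : rel V) (n : nat)
  (sigma : 'I_n -> 'I_n -> R) (F : {ffun V -> 'I_n}) : R :=
  \prod_(p : V * V | is_edge e p) sigma (F p.1) (F p.2).

(* Var[w] = E |w - E w|^2, for w = re + i im. *)
Definition varC d (T : measurableType d) (R : realType) (P : probability T R)
  (re im : T -> R) : R :=
  fine ('E_P[fun t => ((re t - fine 'E_P[re]) ^+ 2 + (im t - fine 'E_P[im]) ^+ 2)%R])%E.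

Definition absC (R : realType) (x y : R) : R := Num.sqrt (x ^+ 2 + y ^+ 2).

(* Joint (mutual) independence of a finite family of R^2-valued (= C-valued)
   random variables X k, k in K: the product rule for every subfamily J and
   every choice of measurable sets of R*R (product sigma-algebra = Borel(C)). *)
Definition mutually_independent d (T : measurableType d) (R : realType)
  (P : probability T R) (I : finType) (K : {set I}) (X : I -> T -> R * R) : Prop :=
  forall (J : {set I}) (A : I -> set (R * R)),
    J \subset K -> (forall k, measurable (A k)) ->
    P [set t | forall k, k \in J -> A k (X k t)] =
    (\prod_(k in J) P (X k @^-1` A k))%E.

(* Main.v *)
Require Import Defs.
From HB Require Import structures.
From mathcomp Require Import all_boot all_order all_algebra.
From mathcomp Require Import all_classical all_reals all_analysis.
Import Order.TTheory GRing.Theory Num.Theory.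
Import numFieldTopology.Exports numFieldNormedType.Exports.
Local Open Scope ring_scope.
Local Open Scope classical_set_scope.



Lemma varC_bounds d (T : measurableType d) (R : realType) (P : probability T R)
  (X Y : {RV P >-> R}) (eta : R) :
  ('E_P[X] = 0)%E -> ('E_P[Y] = 0)%E ->
  (forall t, absC (X t) (Y t) <= eta) -> 0 <= varC P X Y <= eta ^+ 2.
Proof.
move=> EX EY hb.
have hE : varC P X Y = fine ('E_P[fun t => (X t ^+ 2 + Y t ^+ 2)%R])%E.
  rewrite /varC EX EY; congr fine; congr expectation; apply/funext => t /=; by rewrite !subr0.
rewrite hE.
have h0 : forall t, 0 <= X t ^+ 2 + Y t ^+ 2 by move=> t; rewrite addr_ge0 // sqr_ge0.
have hle : forall t, X t ^+ 2 + Y t ^+ 2 <= eta ^+ 2.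
  move=> t; have := hb t; rewrite /absC => h.
  have e0 : 0 <= eta by apply: le_trans h; exact: sqrtr_ge0.
  by rewrite -(sqr_sqrtr (h0 t)) ler_pXn2r // ?nnegrE ?sqrtr_ge0.
have ge : (0 <= 'E_P[fun t => (X t ^+ 2 + Y t ^+ 2)%R])%E by apply: expectation_ge0.
have le : ('E_P[fun t => (X t ^+ 2 + Y t ^+ 2)%R] <= (eta ^+ 2)%:E)%E.
  rewrite -(expectation_cst P); apply: expectation_le => //.
  - apply: measurable_realfun.measurable_funD; apply: measurable_realfun.measurable_funX; exact: measurable_funPT.
  - by move=> x; rewrite /= sqr_ge0.
  - exact: aeW.
rewrite fine_ge0 //=.
have : ('E_P[fun t => (X t ^+ 2 + Y t ^+ 2)%R] \is a fin_num)%E.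
  by rewrite ge0_fin_numE // (le_lt_trans le) // ltry.
move=> fin; by rewrite -lee_fin fineK.
Qed.


Lemma varC0 d (T : measurableType d) (R : realType) (P : probability T R)
  (X Y : {RV P >-> R}) :
  ('E_P[X] = 0)%E -> ('E_P[Y] = 0)%E ->
  varC P X Y = fine ('E_P[fun t => (X t ^+ 2 + Y t ^+ 2)%R])%E.
Proof.
move=> EX EY; rewrite /varC EX EY; congr fine; congr expectation.
by apply/funext => t /=; rewrite !subr0.
Qed.


Definition wt {R : realType} {n k : nat} (par : nat -> nat) (s : 'I_n -> 'I_n -> R)
  (g : {ffun 'I_k -> 'I_n}) : R :=
  \prod_(m < k) \prod_(q < k | (nat_of_ord q == par m)%N && (0 < m)%N) s (g q) (g m).

Definition ext {n k : nat} (g : {ffun 'I_k -> 'I_n}) (j : 'I_n) : {ffun 'I_k.+1 -> 'I_n} :=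
  [ffun i => if unlift ord_max i is Some i' then g i' else j].

Lemma extW n k (g : {ffun 'I_k -> 'I_n}) j i : ext g j (widen_ord (leqnSn k) i) = g i.
Proof.
have -> : widen_ord (leqnSn k) i = lift ord_max i by apply: val_inj; rewrite [RHS]lift_max.
by rewrite /ext ffunE liftK.
Qed.

Lemma extL n k (g : {ffun 'I_k -> 'I_n}) j i : ext g j (lift ord_max i) = g i.
Proof. by rewrite /ext ffunE liftK. Qed.

Lemma extM n k (g : {ffun 'I_k -> 'I_n}) j : ext g j ord_max = j.
Proof. by rewrite /ext ffunE unlift_none. Qed.

Lemma sum_ext (R : realType) n k (F : {ffun 'I_k.+1 -> 'I_n} -> R) :
  \sum_f F f = \sum_(g : {ffun 'I_k -> 'I_n}) \sum_(j : 'I_n) F (ext g j).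
Proof.
rewrite pair_big /=.
pose h := fun p : {ffun 'I_k -> 'I_n} * 'I_n => ext p.1 p.2.
pose h' := fun f : {ffun 'I_k.+1 -> 'I_n} => ([ffun i => f (lift ord_max i)], f ord_max).
rewrite (reindex h) //=.
exists h' => [[g j] _ | f _]; rewrite /h /h' /=.
  by congr pair; [apply/ffunP => i; rewrite ffunE extL | rewrite extM].
apply/ffunP => i; rewrite /ext ffunE; case: unliftP => [i' ->|->] //.
by rewrite ffunE.
Qed.

Lemma inj_ext n k (g : {ffun 'I_k -> 'I_n}) j :
  injectiveb (ext g j) = injectiveb g && (j \notin codom g).
Proof.
apply/injectiveP/andP => [hi | [/injectiveP hg hj]].
  split.
    apply/injectiveP => a b hab; apply: (@lift_inj _ ord_max); apply: hi.
    by rewrite !extL.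
  apply/codomP => -[a ha]; have := hi (lift ord_max a) ord_max.
  rewrite extL extM -ha => /(_ erefl) e; by have := neq_lift ord_max a; rewrite e eqxx.
move=> x y; case: (unliftP ord_max x) => [x' ->|->]; case: (unliftP ord_max y) => [y' ->|->];
  rewrite ?extL ?extM //.
- by move/hg ->.
- by move=> e; case/negP: hj; rewrite -e codom_f.
- by move=> e; case/negP: hj; rewrite e codom_f.
Qed.

Lemma wt_ext (R : realType) n k par (s : 'I_n -> 'I_n -> R) (g : {ffun 'I_k -> 'I_n}) j :
  (forall m, (0 < m)%N -> (par m < m)%N) ->
  wt par s (ext g j) = wt par s g *
     \prod_(q < k | (nat_of_ord q == par k)%N && (0 < k)%N) s (g q) j.
Proof.
move=> hp; rewrite /wt big_ord_recr /=; congr (_ * _).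
  apply: eq_bigr => m _.
  rewrite big_mkcond big_ord_recr /= -big_mkcond /=.
  case: ifP => [/andP[/eqP e hm]|_].
    by have := hp _ hm; rewrite -e ltnNge (ltnW (ltn_ord m)).
  rewrite mulr1; apply: eq_bigr => q _; by rewrite !extW.
rewrite big_mkcond big_ord_recr /= -big_mkcond /=.
case: ifP => [/andP[/eqP e hm]|_].
  by have := hp _ hm; rewrite -e ltnn.
rewrite mulr1; apply: eq_bigr => q _; by rewrite !extW extM.
Qed.

Lemma prod_par (R : realType) k par (F : 'I_k -> R) (hk : (0 < k)%N) (hp : (par k < k)%N) :
  \prod_(q < k | (nat_of_ord q == par k)%N && (0 < k)%N) F q = F (Ordinal hp).
Proof.
apply: big_pred1 => q /=; rewrite hk andbT; by [].
Qed.


Lemma part_sum (R : realType) n K (h : {ffun 'I_K -> 'I_n} -> R) (x : 'I_n -> R) p :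
  \sum_(g : {ffun 'I_K -> 'I_n}) h g * x (g p) = \sum_i x i * \sum_(g : {ffun 'I_K -> 'I_n} | g p == i) h g.
Proof.
rewrite (partition_big (fun g : {ffun 'I_K -> 'I_n} => g p) predT) //=.
apply: eq_bigr => i _; rewrite mulr_sumr; apply: eq_bigr => g /eqP ->.
by rewrite mulrC.
Qed.

Lemma wt_ge0 (R : realType) n k par (s : 'I_n -> 'I_n -> R) (g : {ffun 'I_k -> 'I_n}) :
  (forall i j, 0 <= s i j) -> 0 <= wt par s g.
Proof. by move=> s0; apply: prodr_ge0 => m _; apply: prodr_ge0 => q _. Qed.

Lemma wt_bound (R : realType) n par (s : 'I_n -> 'I_n -> R) C :
  (forall i j, 0 <= s i j) -> (forall i j, s i j = s j i) ->
  (forall i, \sum_j s i j <= C) -> 0 <= C ->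
  (forall m, (0 < m)%N -> (par m < m)%N) ->
  forall k (a : 'I_k.+1) (i : 'I_n),
  \sum_(g : {ffun 'I_k.+1 -> 'I_n} | g a == i) wt par s g <= C ^+ k.
Proof.
move=> s0 ssym srow C0 hp; elim=> [|k IH] a i.
  rewrite big_mkcond sum_ext /=.
  have -> : a = ord_max by apply/val_inj; case: a => m; rewrite /= ltnS leqn0 => /eqP ->.
  under eq_bigr => g _ do under eq_bigr => j _ do rewrite extM wt_ext // big_ord0 mulr1.
  under eq_bigr => g _ do rewrite -big_mkcond big_pred1_eq /wt big_ord0.
  by rewrite sumr_const card_ffun !card_ord expn0 expr0.
rewrite big_mkcond sum_ext /=.
have hk : (0 < k.+1)%N by [].
have hpk := hp _ hk.
under eq_bigr => g _ do under eq_bigr => j _ do rewrite wt_ext // (@prod_par _ _ _ _ hk hpk).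
case: (unliftP ord_max a) => [a' ->|->].
  under eq_bigr => g _ do under eq_bigr => j _ do rewrite extL.
  apply: (@le_trans _ _ (\sum_(g : {ffun 'I_k.+1 -> 'I_n})
      (if g a' == i then wt par s g * C else 0))).
    apply: ler_sum => g _; case: ifP => _; last by rewrite big1.
    by rewrite -mulr_sumr ler_wpM2l // wt_ge0.
  by rewrite -big_mkcond -mulr_suml exprSr ler_wpM2r.
under eq_bigr => g _ do under eq_bigr => j _ do rewrite extM.
under eq_bigr => g _ do rewrite -big_mkcond big_pred1_eq ssym.
rewrite part_sum exprS.
apply: (@le_trans _ _ (\sum_i' s i i' * C ^+ k)).
  by apply: ler_sum => i' _; rewrite ler_wpM2l.
by rewrite -mulr_suml ler_wpM2r // exprn_ge0.
Qed.


Lemma step_eq (R : realType) n k par (s : 'I_n -> 'I_n -> R) (pk : 'I_k.+1) :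
  (forall m, (0 < m)%N -> (par m < m)%N) -> nat_of_ord pk = par k.+1 ->
  \sum_(f : {ffun 'I_k.+2 -> 'I_n} | injectiveb f) wt par s f =
  \sum_(g : {ffun 'I_k.+1 -> 'I_n} | injectiveb g) wt par s g
  + \sum_(g : {ffun 'I_k.+1 -> 'I_n} | injectiveb g) wt par s g * (\sum_j s (g pk) j - 1)
  - \sum_(g : {ffun 'I_k.+1 -> 'I_n} | injectiveb g) wt par s g *
       \sum_(j | j \in codom g) s (g pk) j.
Proof.
move=> hp hpk.
have ht : forall (g : {ffun 'I_k.+1 -> 'I_n}) j,
    \prod_(q < k.+1 | (nat_of_ord q == par k.+1)%N && (0 < k.+1)%N) s (g q) j = s (g pk) j.
  move=> g j; apply: big_pred1 => q /=; rewrite andbT.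
  by rewrite -hpk; apply/eqP/eqP => [e|->] //; apply/val_inj.
rewrite big_mkcond sum_ext /=.
under eq_bigr => g _ do under eq_bigr => j _ do rewrite inj_ext wt_ext // ht.
rewrite -big_split -sumrB /= [RHS]big_mkcond /=; apply: eq_bigr => g _.
case: (injectiveb g) => /=; last by rewrite big1.
rewrite -big_mkcond /= (bigID (mem (codom g)) predT (fun j => s (g pk) j)) /=.
rewrite -mulr_sumr.
set a := \sum_(j | _) _; set b := \sum_(j | _) _.
by rewrite mulrBr mulrDr mulr1 [wt _ _ _ + _]addrC subrK addrC addKr.
Qed.

Lemma codom_sum (R : realType) n K (g : {ffun 'I_K -> 'I_n}) (F : 'I_n -> R) :
  (forall j, 0 <= F j) -> \sum_(j | j \in codom g) F j <= \sum_m F (g m).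
Proof.
move=> F0.
rewrite (partition_big (fun m => g m) predT) //= big_mkcond /=.
apply: ler_sum => j _; case: ifP => hj; last by apply: sumr_ge0.
case/codomP: hj => m0 ->.
rewrite (bigD1 m0) //= lerDl; apply: sumr_ge0 => m /andP[/eqP -> _]; exact: F0.
Qed.

Lemma sum_wt_all (R : realType) n par (s : 'I_n -> 'I_n -> R) C :
  (forall i j, 0 <= s i j) -> (forall i j, s i j = s j i) ->
  (forall i, \sum_j s i j <= C) -> 0 <= C ->
  (forall m, (0 < m)%N -> (par m < m)%N) ->
  forall k, \sum_(g : {ffun 'I_k.+1 -> 'I_n}) wt par s g <= n%:R * C ^+ k.
Proof.
move=> s0 ssym srow C0 hp k.
rewrite (partition_big (fun g : {ffun 'I_k.+1 -> 'I_n} => g ord0) predT) //=.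
apply: (@le_trans _ _ (\sum_(i < n) C ^+ k)).
  apply: ler_sum => i _; exact: wt_bound.
by rewrite sumr_const card_ord mulr_natl.
Qed.

Lemma E1_bound (R : realType) n par (s : 'I_n -> 'I_n -> R) C k (pk : 'I_k.+1) :
  (forall i j, 0 <= s i j) -> (forall i j, s i j = s j i) ->
  (forall i, \sum_j s i j <= C) -> 0 <= C ->
  (forall m, (0 < m)%N -> (par m < m)%N) ->
  `| n%:R^-1 * \sum_(g : {ffun 'I_k.+1 -> 'I_n} | injectiveb g)
        wt par s g * (\sum_j s (g pk) j - 1) |
  <= C ^+ k * (n%:R^-1 * \sum_(i < n) `| \sum_(j < n) (s i j - n%:R^-1) |).
Proof.
move=> s0 ssym srow C0 hp.
rewrite normrM ger0_norm ?invr_ge0 ?ler0n // mulrCA ler_wpM2l ?invr_ge0 ?ler0n //.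
apply: (le_trans (ler_norm_sum _ _ _)).
apply: (@le_trans _ _ (\sum_(g : {ffun 'I_k.+1 -> 'I_n}) wt par s g * `|\sum_j s (g pk) j - 1|)).
  apply: (@le_trans _ _ (\sum_(g : {ffun 'I_k.+1 -> 'I_n} | injectiveb g) wt par s g * `|\sum_j s (g pk) j - 1|)).
    by apply: ler_sum => g _; rewrite normrM ger0_norm // wt_ge0.
  rewrite [X in _ <= X](bigID (fun g : {ffun 'I_k.+1 -> 'I_n} => injectiveb g)) /= lerDl.
  by apply: sumr_ge0 => g _; rewrite mulr_ge0 // wt_ge0.
rewrite (@part_sum _ _ _ (fun g => wt par s g) (fun i => `|\sum_j s i j - 1|)).
rewrite mulr_sumr; apply: ler_sum => i _.
have -> : \sum_j s i j - 1 = \sum_(j < n) (s i j - n%:R^-1).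
  have n0 : (0 < n)%N by case: i => i /= /(leq_ltn_trans (leq0n i)).
  rewrite sumrB sumr_const card_ord -[_ *+ n]mulr_natr mulVf //.
  by rewrite pnatr_eq0 -lt0n.
rewrite mulrC ler_wpM2r //; exact: wt_bound.
Qed.

Lemma E2_bound (R : realType) n par (s : 'I_n -> 'I_n -> R) C (eps : R) k (pk : 'I_k.+1) :
  (forall i j, 0 <= s i j) -> (forall i j, s i j = s j i) ->
  (forall i, \sum_j s i j <= C) -> 0 <= C ->
  (forall m, (0 < m)%N -> (par m < m)%N) ->
  (forall i j, s i j <= eps) -> 0 <= eps ->
  0 <= n%:R^-1 * \sum_(g : {ffun 'I_k.+1 -> 'I_n} | injectiveb g)
        wt par s g * \sum_(j | j \in codom g) s (g pk) j
  <= C ^+ k * (k.+1%:R * eps).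
Proof.
move=> s0 ssym srow C0 hp sle e0.
apply/andP; split.
  rewrite mulr_ge0 ?invr_ge0 ?ler0n //; apply: sumr_ge0 => g _.
  by rewrite mulr_ge0 ?wt_ge0 // sumr_ge0.
apply: (@le_trans _ _ (n%:R^-1 * \sum_(g : {ffun 'I_k.+1 -> 'I_n}) wt par s g * (k.+1%:R * eps))).
  rewrite ler_wpM2l ?invr_ge0 ?ler0n //.
  rewrite [X in _ <= X](bigID (fun g : {ffun 'I_k.+1 -> 'I_n} => injectiveb g)) /=.
  apply: ler_wpDr.
    by apply: sumr_ge0 => g _; rewrite mulr_ge0 ?wt_ge0 // mulr_ge0.
  apply: ler_sum => g _; rewrite ler_wpM2l ?wt_ge0 //.
  apply: (le_trans (@codom_sum _ _ _ g (s (g pk)) (fun j => s0 _ _))).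
  apply: (@le_trans _ _ (\sum_(m < k.+1) eps)); first by apply: ler_sum.
  by rewrite sumr_const card_ord mulr_natl.
rewrite -mulr_suml.
have hb := @sum_wt_all _ _ par s C s0 ssym srow C0 hp k.
case: n s s0 ssym srow sle pk hb => [|n] s s0 ssym srow sle pk hb.
  by rewrite invr0 mul0r mulr_ge0 // ?exprn_ge0 // mulr_ge0.
set X := k.+1%:R * eps; rewrite mulrA; apply: ler_wpM2r; first by rewrite /X mulr_ge0.
rewrite -(ler_pM2l (ltr0Sn _ n)) mulrA mulfV ?pnatr_eq0 // mul1r.
by [].
Qed.


Lemma main_lim (R : realType) (s : forall n, 'I_n -> 'I_n -> R) (eps : nat -> R) C par :
  (forall n i j, 0 <= s n i j) -> (forall n i j, s n i j = s n j i) ->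
  (forall n i, \sum_j s n i j <= C) -> 0 <= C ->
  (forall n i j, s n i j <= eps n) -> (forall n, 0 <= eps n) -> eps @ \oo --> (0:R) ->
  (fun n => n%:R^-1 * \sum_(i < n) `| \sum_(j < n) (s n i j - n%:R^-1) |) @ \oo --> (0 : R) ->
  (forall m, (0 < m)%N -> (par m < m)%N) ->
  forall k, (fun n => n%:R^-1 * \sum_(g : {ffun 'I_k.+1 -> 'I_n} | injectiveb g)
                 wt par (s n) g) @ \oo --> (1:R).
Proof.
move=> s0 ssym srow C0 sle e0 ecvg acvg hp; elim=> [|k IH].
  apply: cvg_trans (near_eq_cvg _) (cvg_cst (1:R)).
  near=> n.
  rewrite (eq_bigl predT); last first.
    by move=> g; apply/injectiveP => x y _; rewrite (ord1 x) (ord1 y).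
  have w1 : forall g : {ffun 'I_1 -> 'I_n}, wt par (s n) g = 1.
    by move=> g; rewrite /wt big_ord1; apply: big1 => q /andP[].
  under eq_bigr => g _ do rewrite w1.
  rewrite sumr_const card_ffun !card_ord expn1 -[_ *+ n]mulr_natr mul1r mulVf //.
  rewrite pnatr_eq0 -lt0n.
  near: n; by exists 1%N.
have hpk : (par k.+1 < k.+1)%N by apply: hp.
pose pk := Ordinal hpk.
pose D := fun n => n%:R^-1 * \sum_(g : {ffun 'I_k.+1 -> 'I_n} | injectiveb g) wt par (s n) g.
pose E1 := fun n => n%:R^-1 * \sum_(g : {ffun 'I_k.+1 -> 'I_n} | injectiveb g)
        wt par (s n) g * (\sum_j s n (g pk) j - 1).
pose E2 := fun n => n%:R^-1 * \sum_(g : {ffun 'I_k.+1 -> 'I_n} | injectiveb g)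
        wt par (s n) g * \sum_(j | j \in codom g) s n (g pk) j.
pose a := fun n => n%:R^-1 * \sum_(i < n) `| \sum_(j < n) (s n i j - n%:R^-1) |.
have -> : (fun n => n%:R^-1 * \sum_(g : {ffun 'I_k.+2 -> 'I_n} | injectiveb g)
                 wt par (s n) g) = fun n => D n + E1 n - E2 n.
  apply/funext => n; by rewrite (@step_eq _ _ _ _ _ pk hp erefl) mulrBr mulrDr.
have h1 : E1 @ \oo --> (0:R).
  apply: (@squeeze_cvgr _ _ _ _ (fun n => - (C ^+ k * a n)) (fun n => C ^+ k * a n)).
    near=> n; rewrite -ler_norml; exact: E1_bound.
    by rewrite -oppr0 -(mulr0 (C ^+ k)); apply: cvgN; apply: cvgMl_tmp.
  by rewrite -(mulr0 (C ^+ k)); apply: cvgMl_tmp.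
have h2 : E2 @ \oo --> (0:R).
  apply: (@squeeze_cvgr _ _ _ _ (fun n => 0) (fun n => C ^+ k * (k.+1%:R * eps n))).
    near=> n; exact: E2_bound.
    exact: cvg_cst.
  by rewrite -(mulr0 (C ^+ k)) -(mulr0 k.+1%:R); apply: cvgMl_tmp; apply: cvgMl_tmp.
have := cvgB (cvgD IH h1) h2; rewrite addr0 subr0; exact.
Unshelve. all: by end_near.
Qed.

Set Implicit Arguments. Unset Strict Implicit.


Definition er (V : finType) (e : rel V) (S : seq V) : rel V :=
  fun x y => e x y && (x \in S) && (y \in S).

Lemma er_sym (V : finType) (e : rel V) S : symmetric e -> symmetric (er e S).
Proof. by move=> sym x y; rewrite /er sym; case: (x \in S); case: (y \in S); rewrite ?andbT ?andbF. Qed.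

Lemma path_er_mem (V : finType) (e : rel V) S x p :
  path (er e S) x p -> {subset p <= S}.
Proof.
elim: p x => [|y p IH] x //= /andP[/andP[/andP[_ _] yS] pp] z.
by rewrite in_cons => /orP[/eqP ->|hz]; [|apply: (IH y pp)].
Qed.

Lemma no_two (V : finType) (e : rel V) (S : seq V) v u1 u2 :
  symmetric e -> (forall c : seq V, (3 <= size c)%N -> ~ ucycle e c) ->
  v \notin S -> u1 \in S -> u1 != u2 -> connect (er e S) u1 u2 ->
  e u1 v -> e u2 v -> False.
Proof.
move=> sym acyc vS u1S ne /connectP[p pp pl] e1 e2.
rewrite pl in e2 ne => {pl}.
case: (shortenP pp) e2 ne => p' pp' up' _ e2 ne.
have allS := path_er_mem pp'.
have pe : path e u1 p' by apply: sub_path pp' => x y /andP[/andP[]].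
apply: (acyc (v :: u1 :: p')).
  by case: p' {pp' up' allS pe} e2 ne => [|z p'] /=; rewrite ?eqxx.
rewrite /ucycle /= rcons_path pe e2 andbT sym e1 /=.
move: up' => /= /andP[-> ->]; rewrite !andbT in_cons negb_or.
apply/andP; split.
  by apply/eqP => evu; move: vS; rewrite evu u1S.
by apply/negP => /allS; apply/negP.
Qed.

Definition Par (V : finType) (e : rel V) (x0 : V) (s : seq V) :=
  forall i, (0 < i)%N -> (i < size s)%N ->
    exists2 j, (j < i)%N & e (nth x0 s j) (nth x0 s i).

Lemma pref_conn (V : finType) (e : rel V) (x0 : V) s :
  Par e x0 s -> forall i, (i < size s)%N -> forall k, (i < k)%N ->
  connect (er e (take k s)) (nth x0 s 0) (nth x0 s i).
Proof.
move=> hP; elim/ltn_ind => i IH hi k hik.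
case: i IH hi hik => [|i] IH hi hik; first exact: connect0.
have [j hj ejs] := hP i.+1 erefl hi.
have hjs : (j < size s)%N by apply: ltn_trans hj hi.
have hjk : (j < k)%N by apply: ltn_trans hj hik.
apply: connect_trans (IH j hj hjs k hjk) (connect1 _).
have memk : forall l, (l < size s)%N -> (l < k)%N -> nth x0 s l \in take k s.
  move=> l hl hl'; rewrite -(nth_take x0 hl'); apply: mem_nth.
  by rewrite size_take_min leq_min hl' hl.
by rewrite /er ejs !memk.
Qed.

Lemma par_unique (V : finType) (e : rel V) (x0 : V) s :
  symmetric e -> (forall c : seq V, (3 <= size c)%N -> ~ ucycle e c) ->
  uniq s -> Par e x0 s ->
  forall i j j', (j < i)%N -> (j' < i)%N -> (i < size s)%N ->
  e (nth x0 s j) (nth x0 s i) -> e (nth x0 s j') (nth x0 s i) -> j = j'.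
Proof.
move=> sym acyc us hP i j j' hj hj' hi e1 e2.
apply/eqP; apply/negPn/negP => ne.
have hjs : (j < size s)%N by apply: ltn_trans hj hi.
have hjs' : (j' < size s)%N by apply: ltn_trans hj' hi.
have memk : forall l, (l < size s)%N -> (l < i)%N -> nth x0 s l \in take i s.
  move=> l hl hl'; rewrite -(nth_take x0 hl'); apply: mem_nth.
  by rewrite size_take_min leq_min hl' hl.
apply: (@no_two _ e (take i s) (nth x0 s i) (nth x0 s j) (nth x0 s j')) => //.
- apply/negP => /index_ltn; by rewrite index_uniq // ltnn.
- exact: memk.
- by rewrite nth_uniq.
- apply: connect_trans (pref_conn hP hjs' hj').
  by rewrite (sym_connect_sym (er_sym _ sym)); apply: pref_conn.
Qed.

Lemma build (V : finType) (e : rel V) (x0 : V) :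
  symmetric e -> (forall x y, connect e x y) ->
  forall m, (m < #|V|)%N -> exists s, [/\ uniq s, size s = m.+1 & Par e x0 s].
Proof.
move=> sym conn; elim=> [|m IH] hm.
  exists [:: x0]; split => // i h0 h1; by case: i h0 h1.
have [s [us ss ps]] := IH (ltnW hm).
have [v [u [vS uS euv]]] : exists v u, [/\ v \notin s, u \in s & e u v].
  case: (boolP [exists v, (v \notin s) && [exists u, (u \in s) && e u v]]).
    by case/existsP => v /andP[vS /existsP[u /andP[uS euv]]]; exists v, u.
  move=> hn; exfalso.
  have cl : closed_mem e (mem s).
    apply: intro_closed; first exact: sym_connect_sym.
    move=> x y exy xs; apply/negPn/negP => ys; case/negP: hn.
    by apply/existsP; exists y; rewrite ys /=; apply/existsP; exists x; rewrite xs.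
  have allin : forall y, y \in s.
    move=> y; rewrite -(closed_connect cl (conn (nth x0 s 0) y)).
    by apply: mem_nth; rewrite ss.
  have : (#|V| <= size s)%N.
    apply: (leq_trans _ (card_size s)).
    by rewrite (@eq_card _ _ (mem s)) // => y; rewrite !inE allin.
  by rewrite ss leqNgt hm.
exists (rcons s v); split.
- by rewrite rcons_uniq vS us.
- by rewrite size_rcons ss.
- move=> i h0; rewrite size_rcons ltnS leq_eqVlt => /orP[/eqP ->|hi].
    exists (index u s); first by rewrite index_mem.
    by rewrite !nth_rcons index_mem uS nth_index // ltnn eqxx.
  have [j hj ej] := ps i h0 hi.
  exists j => //; rewrite !nth_rcons hi (ltn_trans hj hi) //.
Qed.


Lemma tree_order (V : finType) (e : rel V) (x0 : V) : is_tree e ->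
  exists s (par : nat -> nat), [/\ uniq s, size s = #|V|,
    (forall m, (0 < m)%N -> (par m < m)%N),
    (forall i, (0 < i)%N -> (i < size s)%N -> e (nth x0 s (par i)) (nth x0 s i)) &
    (forall i j, (j < i)%N -> (i < size s)%N -> e (nth x0 s j) (nth x0 s i) -> j = par i)].
Proof.
case=> h0 sym irr conn acyc.
have hV : (#|V|.-1 < #|V|)%N by rewrite prednK.
have [s [us ss ps]] := build x0 sym conn hV.
have ss' : size s = #|V| by rewrite ss prednK.
pose par := fun i => minn (find (fun y => e y (nth x0 s i)) s) i.-1.
have P2 : forall i, (0 < i)%N -> (i < size s)%N ->
    par i = find (fun y => e y (nth x0 s i)) s /\ e (nth x0 s (par i)) (nth x0 s i).
  move=> i hi his; have [j hj ej] := ps i hi his.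
  have hf : (find (fun y => e y (nth x0 s i)) s <= j)%N.
    rewrite leqNgt; apply/negP => /(before_find x0); by rewrite ej.
  have -> : par i = find (fun y => e y (nth x0 s i)) s.
    apply/minn_idPl; rewrite -ltnS prednK //; exact: leq_ltn_trans hf hj.
  split => //; apply: (nth_find x0 (a := fun y => e y (nth x0 s i))).
  apply/hasP; exists (nth x0 s j) => //; apply: mem_nth; exact: ltn_trans hj his.
exists s, par; split => //.
- by move=> m hm; rewrite /par; apply: leq_ltn_trans (geq_minr _ _) _; rewrite prednK.
- by move=> i hi his; case: (P2 i hi his).
- move=> i j hj his ej.
  have hi : (0 < i)%N by apply: leq_ltn_trans hj.
  have [_ ep] := P2 i hi his.
  apply: (par_unique sym acyc us ps hj _ his ej ep).
  by rewrite /par; apply: leq_ltn_trans (geq_minr _ _) _; rewrite prednK.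
Qed.

Unset Implicit Arguments. Set Strict Implicit.


Definition orient (V : finType) (a b : V) : V * V :=
  if (enum_rank a <= enum_rank b)%N then (a, b) else (b, a).
Arguments orient {V} a b.

Lemma is_edge_orient (V : finType) (e : rel V) a b :
  symmetric e -> is_edge e (orient a b) = e a b.
Proof.
move=> sym; rewrite /orient /is_edge; case: ifP => /= h; first by rewrite h andbT.
by rewrite sym andbC ltnW // ltnNge h.
Qed.

Lemma transfer_wt (R : realType) (V : finType) (e : rel V) K (tau : V -> 'I_K)
  (sig : 'I_K -> V) (par : nat -> nat) n (S : 'I_n -> 'I_n -> R) :
  symmetric e -> irreflexive e -> cancel sig tau -> cancel tau sig ->
  (forall q m : 'I_K, (nat_of_ord q == par m)%N -> (0 < m)%N -> e (sig q) (sig m)) ->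
  (forall q m : 'I_K, (q < m)%N -> e (sig q) (sig m) -> nat_of_ord q = par m) ->
  (forall m, (0 < m)%N -> (par m < m)%N) ->
  (forall i j, S i j = S j i) ->
  forall g : {ffun 'I_K -> 'I_n}, Pweight e S [ffun v => g (tau v)] = wt par S g.
Proof.
move=> sym irr st ts A1 A2 hp Ssym g.
rewrite /wt pair_big_dep /= /Pweight.
pose h := fun p : 'I_K * 'I_K => orient (sig p.2) (sig p.1).
pose h' := fun ab : V * V => if (tau ab.1 < tau ab.2)%N then (tau ab.2, tau ab.1)
                             else (tau ab.1, tau ab.2).
have h'sym : forall a b, h' (a, b) = h' (b, a).
  move=> a b; rewrite /h' /=; case: ltngtP => // hab.
  by have -> : tau a = tau b by apply/val_inj.
have h'o : forall a b, h' (orient a b) = h' (a, b).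
  by move=> a b; rewrite /orient; case: ifP => // _; rewrite h'sym.
rewrite (reindex_onto h h').
  apply: eq_big => [[m q]|[m q] _] /=.
    rewrite /h is_edge_orient // h'o /h' /= !st.
    case: ltnP => hqm.
      apply/idP/idP => [/andP[eqm _]|/andP[/eqP eq hm]].
        by rewrite (A2 _ _ hqm eqm) eqxx (leq_ltn_trans _ hqm).
      by rewrite A1 ?eq //= eqxx.
    rewrite [RHS](_ : _ = false); last first.
      apply/negbTE/negP => /andP[/eqP eq hm]; by have := hp _ hm; rewrite -eq ltnNge hqm.
    apply/negbTE/negP => /andP[eqm /eqP [eq1 _]].
    by move: eqm; rewrite -eq1 irr.
  rewrite /h /orient; case: ifP => _ /=; rewrite !ffunE !st //.
move=> [a b] /andP /= [eab hab]; rewrite /h /h' /=.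
have nab : a != b by apply/eqP => eq; move: eab; rewrite eq irr.
case: ltnP => ht /=; rewrite !ts /orient.
  by rewrite hab.
case: ifP => // hba.
have : enum_rank a = enum_rank b by apply/val_inj/anti_leq; rewrite hab hba.
by move/enum_rank_inj => eq; move: nab; rewrite eq eqxx.
Qed.

Lemma transfer_sum (R : realType) (V : finType) (e : rel V) K (tau : V -> 'I_K)
  (sig : 'I_K -> V) (par : nat -> nat) n (S : 'I_n -> 'I_n -> R) :
  symmetric e -> irreflexive e -> cancel sig tau -> cancel tau sig ->
  (forall q m : 'I_K, (nat_of_ord q == par m)%N -> (0 < m)%N -> e (sig q) (sig m)) ->
  (forall q m : 'I_K, (q < m)%N -> e (sig q) (sig m) -> nat_of_ord q = par m) ->
  (forall m, (0 < m)%N -> (par m < m)%N) ->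
  (forall i j, S i j = S j i) ->
  \sum_(F : {ffun V -> 'I_n} | injectiveb F) Pweight e S F =
  \sum_(g : {ffun 'I_K -> 'I_n} | injectiveb g) wt par S g.
Proof.
move=> sym irr st ts A1 A2 hp Ssym.
pose h := fun g : {ffun 'I_K -> 'I_n} => [ffun v => g (tau v)].
pose h' := fun F : {ffun V -> 'I_n} => [ffun i => F (sig i)].
rewrite (reindex h); last first.
  exists h' => [g _|F _]; apply/ffunP => x; rewrite !ffunE ?st ?ts //.
apply: eq_big => g.
  apply/injectiveP/injectiveP => hi x y.
    move=> gxy; rewrite -(st x) -(st y); congr tau; apply: hi.
    by rewrite /h !ffunE !st.
  rewrite /h !ffunE => /hi hxy; by rewrite -(ts x) -(ts y) hxy.
move=> _; exact: transfer_wt.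
Qed.

Theorem lemma3p2 (R : realType)
  (d : nat -> measure_display) (T : forall n, measurableType (d n))
  (P : forall n, probability (T n) R)
  (re im : forall n, 'I_n -> 'I_n -> {RV (P n) >-> R})
  (eta : nat -> R) (C : R) :
  (* Hermitian: w_ji = conj w_ij *)
  (forall n (i j : 'I_n) t, re n j i t = re n i j t /\ im n j i t = - im n i j t) ->
  (* upper triangular entries jointly independent *)
  (forall n, mutually_independent (P n) [set ij : 'I_n * 'I_n | (ij.1 <= ij.2)%N]
               (fun ij t => (re n ij.1 ij.2 t, im n ij.1 ij.2 t))) ->
  (* mean zero *)
  (forall n (i j : 'I_n), ('E_(P n)[re n i j] = 0)%E /\ ('E_(P n)[im n i j] = 0)%E) ->
  (* uniformly small entries *)
  (forall n, 0 < eta n) -> eta @ \oo --> (0 : R) ->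
  (forall n (i j : 'I_n) t, absC (re n i j t) (im n i j t) <= eta n) ->
  (* bounded row sums of variances *)
  0 <= C ->
  (forall n (i : 'I_n), \sum_(j < n) varC (P n) (re n i j) (im n i j) <= C) ->
  (* averaged row sums of variances close to 1 *)
  (fun n => n%:R^-1 * \sum_(i < n)
      `| \sum_(j < n) (varC (P n) (re n i j) (im n i j) - n%:R^-1) |) @ \oo --> (0 : R) ->
  forall (V : finType) (e : rel V), is_tree e ->
  (fun n => n%:R^-1 * \sum_(F : {ffun V -> 'I_n} | @injections V n F)
      Pweight e (fun i j => varC (P n) (re n i j) (im n i j)) F) @ \oo --> (1 : R).


Proof.
move=> herm indep mean eta0 etacvg etab C0 srow acvg V e tree.
pose S := fun n (i j : 'I_n) => varC (P n) (re n i j) (im n i j).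
have Sb : forall n i j, 0 <= S n i j <= eta n ^+ 2.
  move=> n i j; have [m1 m2] := mean n i j; exact: (@varC_bounds _ _ _ _ _ _ _ m1 m2 (etab n i j)).
have Ssym : forall n i j, S n i j = S n j i.
  move=> n i j; rewrite /S.
  have [a1 a2] := mean n i j; have [b1 b2] := mean n j i.
  rewrite (@varC0 _ _ _ _ _ _ a1 a2) (@varC0 _ _ _ _ _ _ b1 b2); congr fine; congr expectation; apply/funext => t.
  by have [h1 h2] := herm n i j t; rewrite h1 h2 sqrrN.
case: (tree) => h0 sym irr conn acyc.
have [x0 _] : exists x0 : V, true by case/card_gt0P: h0 => x _; exists x.
have [s [par [us ss hp P2 P3]]] := tree_order x0 tree.
set k := #|V|.-1.
have hk : #|V| = k.+1 by rewrite prednK.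
have allin : forall v, v \in s.
  move=> v; apply/negPn/negP => vn.
  have c := cardC (mem s); rewrite (card_uniqP us) ss in c.
  have : (0 < #|[predC s]|)%N by apply/card_gt0P; exists v; rewrite inE.
  by rewrite -(ltn_add2l #|V|) c addn0 ltnn.
pose tau := fun v : V => (inord (index v s) : 'I_k.+1).
pose sig := fun i : 'I_k.+1 => nth x0 s i.
have st : cancel sig tau.
  by move=> i; rewrite /tau /sig index_uniq ?inord_val // ss hk.
have ts : cancel tau sig.
  by move=> v; rewrite /tau /sig inordK ?nth_index ?allin // -hk -ss index_mem allin.
have A1 : forall q m : 'I_k.+1, (nat_of_ord q == par m)%N -> (0 < m)%N -> e (sig q) (sig m).
  by move=> q m /eqP eq hm; rewrite /sig eq; apply: P2 => //; rewrite ss hk.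
have A2 : forall q m : 'I_k.+1, (q < m)%N -> e (sig q) (sig m) -> nat_of_ord q = par m.
  by move=> q m hqm; apply: P3 => //; rewrite ss hk.
have -> : (fun n => n%:R^-1 * \sum_(F : {ffun V -> 'I_n} | @injections V n F)
      Pweight e (fun i j => varC (P n) (re n i j) (im n i j)) F) =
    (fun n => n%:R^-1 * \sum_(g : {ffun 'I_k.+1 -> 'I_n} | injectiveb g) wt par (S n) g).
  apply/funext => n; congr (_ * _); rewrite /injections.
  exact: (@transfer_sum R V e k.+1 tau sig par n (S n) sym irr st ts A1 A2 hp (Ssym n)).
apply: (@main_lim R S (fun n => eta n ^+ 2) C par) => //.
- by move=> n i j; case/andP: (Sb n i j).
- by move=> n i j; case/andP: (Sb n i j).
- by move=> n; rewrite sqr_ge0.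
- by rewrite -(mulr0 (0:R)); under eq_fun => n do rewrite expr2; apply: cvgM.
Qed.
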